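(* Let $G$ be a graph on $n$ nodes with $m$ edges, and let $k\in\{1,\dots,n\}$ be the index satisfying $\lambda_k(G)>\frac{2m}{n}\ge\lambda_{k+1}(G)$. Then every threshold graph $T$ on $n$ nodes with $m$ edges satisfying $\sum_{i=1}^k d_i^*(T)\ge\sum_{i=1}^k\lambda_i(G)$ also satisfies $LE(T)\ge LE(G)$.
   Context: All graphs are finite and simple. For a graph $G$ on $n$ nodes with $m$ edges, the Laplacian eigenvalues (eigenvalues of $L(G)=D(G)-A(G)$) are $\lambda_1(G)\ge\dots\ge\lambda_n(G)=0$, and the Laplacian energy is $LE(G)=\sum_{i=1}^n\left|\lambda_i(G)-\frac{2m}{n}\right|$. For a graph with degrees $d_1\ge\dots\ge d_n$, the conjugate degrees are $d_i^*=|\{j: d_j\ge i\}|$. A threshold graph is a graph obtainable from the empty graph by repeatedly adding a new node that is either isolated or adjacent to all previously added nodes; for a threshold graph $T$ one has $\lambda_i(T)=d_i^*(T)$ for all $i$. *)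

(* Defs.v *)
From HB Require Import structures.
From mathcomp Require Import all_boot all_order all_algebra all_fingroup.
From mathcomp Require Import reals.
Set Implicit Arguments. Unset Strict Implicit. Unset Printing Implicit Defensive.
Import Order.TTheory GRing.Theory Num.Theory.
Local Open Scope ring_scope.

Definition simple_graph (n : nat) (e : rel 'I_n) : Prop :=
  (forall u v, e u v = e v u) /\ (forall u, ~~ e u u).

Definition deg (n : nat) (e : rel 'I_n) (v : 'I_n) : nat := #|[set u | e v u]|.

Definition nedges (n : nat) (e : rel 'I_n) : nat :=
  #|[set p : 'I_n * 'I_n | (p.1 < p.2)%N && e p.1 p.2]|.

Definition lap (R : realType) (n : nat) (e : rel 'I_n) : 'M[R]_n :=
  \matrix_(i, j) (if i == j then (deg e i)%:R else if e i j then -1 else 0).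

(* lam = [:: lambda_1; ...; lambda_n] is the list of Laplacian eigenvalues of e,
   with multiplicity, in non-increasing order. *)
Definition is_lap_spectrum (R : realType) (n : nat) (e : rel 'I_n) (lam : seq R) : Prop :=
  [/\ size lam = n, sorted (fun x y => y <= x) lam &
      char_poly (lap R e) = \prod_(x <- lam) ('X - x%:P)].

Definition avg_deg (R : realType) (n : nat) (e : rel 'I_n) : R :=
  (2 * nedges e)%:R / n%:R.

Definition lap_energy (R : realType) (n : nat) (e : rel 'I_n) (lam : seq R) : R :=
  \sum_(x <- lam) `|x - avg_deg R e|.

Definition conj_deg (n : nat) (e : rel 'I_n) (i : nat) : nat :=
  #|[set j | (i <= deg e j)%N]|.

(* Threshold graph: there is an order of insertion of the nodes (p v = time at
   which v is added) and for each node a flag b v (true = v was adjacent to all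
   previously added nodes, false = v was added isolated). *)
Definition threshold (n : nat) (e : rel 'I_n) : Prop :=
  exists (p : 'S_n) (b : 'I_n -> bool),
    forall u v : 'I_n, (p u < p v)%N -> e u v = b v.

(* Main.v *)
Require Import Defs.
From HB Require Import structures.
From mathcomp Require Import all_boot all_order all_algebra all_fingroup.
From mathcomp Require Import reals.
From mathcomp Require Import zify ring lra.
Import Order.TTheory GRing.Theory Num.Theory.
Set Implicit Arguments. Unset Strict Implicit. Unset Printing Implicit Defensive.
Section Comb.
Variable b : nat -> bool.
Definition Bc n r := \sum_(r.+1 <= s < n) (b s : nat).
Definition dg n r := b r * r + Bc n r.
Definition mu n c := if c == 0 then 0 else b c * c.+1 + Bc n c.
Definition ds n l := \sum_(0 <= r < n) (l <= dg n r : nat).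

Lemma Bc_S n r : r < n -> Bc n.+1 r = Bc n r + b n.
Proof. by move=> h; rewrite /Bc big_nat_recr. Qed.

Lemma Bc_n n : Bc n.+1 n = 0.
Proof. by rewrite /Bc big_geq. Qed.

Lemma Bc_le n r : Bc n r <= n - r.+1.
Proof.
rewrite /Bc; apply: (@leq_trans (\sum_(r.+1 <= s < n) 1)).
  by apply: leq_sum => i _; case: (b i).
by rewrite sum_nat_const_nat muln1.
Qed.

Lemma dg_lt n r : r < n -> dg n r < n.
Proof.
move=> h; rewrite /dg; have := Bc_le n r; case: (b r); lia.
Qed.

Lemma ds_n n : ds n n = 0.
Proof.
rewrite /ds big_nat_cond big1 // => i /andP [/andP [_ h] _].
by have := dg_lt h; case: leqP.
Qed.

Lemma comb_main n t :
  \sum_(1 <= l < n) (ds n l - t) <= \sum_(1 <= c < n) (mu n c - t).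
Proof.
elim: n t => [|n IH] t; first by rewrite !big_geq.
case: n IH => [|n] IH; first by rewrite !big_geq.
set N := n.+1.
have mu_lt c : 1 <= c < N -> mu N.+1 c = mu N c + b N.
  move=> /andP [h1 h2]; rewrite /mu; case: eqP => [c0|_]; first by subst c.
  by rewrite Bc_S // addnA.
have mu_N : mu N.+1 N = b N * N.+1 by rewrite /mu /= Bc_n addn0.
have dg_lt' r : r < N -> dg N.+1 r = dg N r + b N.
  by move=> h; rewrite /dg Bc_S // addnA.
have dg_N : dg N.+1 N = b N * N by rewrite /dg Bc_n addn0.
have ds_S l : ds N.+1 l = \sum_(0 <= r < N) (l <= dg N r + b N : nat) + (l <= b N * N : nat).
  rewrite /ds big_nat_recr //= dg_N; congr addn.
  by apply: eq_big_nat => r /andP [_ h]; rewrite dg_lt'.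
rewrite [X in _ <= X](big_nat_recr N) //= mu_N.
rewrite (@eq_big_nat _ _ _ 1 N (fun c => mu N.+1 c - t) (fun c => mu N c + b N - t)); last first.
  by move=> c hc; rewrite mu_lt.
case bN: (b N).
- rewrite big_ltn // ds_S bN /=.
  have e1 : \sum_(0 <= r < N) (1 <= dg N r + 1 : nat) = N.
    rewrite (@eq_big_nat _ _ _ 0 N _ (fun _ => 1)); last by move=> r _; rewrite addn1.
    by rewrite sum_nat_const_nat muln1 subn0.
  rewrite e1 mul1n.
  rewrite big_add1 /=.
  rewrite (@eq_big_nat _ _ _ 1 N (fun l => ds N.+1 l.+1 - t) (fun l => ds N l + 1 - t)); last first.
    move=> l /andP [h1 h2]; rewrite ds_S /ds bN mul1n; congr (_ - _); congr addn; last by rewrite h2.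
    by apply: eq_big_nat => r _; rewrite addn1 ltnS.
  rewrite addn1 addnC leq_add2r.
  have IH' := IH.
  case: t => [|t].
  + under eq_big_nat => i _ do rewrite subn0.
    under [X in _ <= X]eq_big_nat => i _ do rewrite subn0.
    rewrite !big_split /= leq_add2r.
    have := IH 0.
    under eq_big_nat => i _ do rewrite subn0.
    under [X in _ <= X]eq_big_nat => i _ do rewrite subn0.
    by [].
  + rewrite (@eq_big_nat _ _ _ 1 N (fun l => ds N l + 1 - t.+1) (fun l => ds N l - t)); last by move=> l _; rewrite addn1 subSS.
    rewrite (@eq_big_nat _ _ _ 1 N (fun l => mu N l + 1 - t.+1) (fun l => mu N l - t)); last by move=> l _; rewrite addn1 subSS.
    by have := IH t.
- rewrite (big_nat_recr N) // ds_S bN mul0n.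
  have -> : \sum_(0 <= r < N) (N <= dg N r + false : nat) = 0.
    by rewrite -[RHS](ds_n N); apply: eq_big_nat => r _; rewrite addn0.
  rewrite leqn0 /= add0n sub0n !addn0.
  under [X in _ <= X]eq_big_nat => i _ do rewrite addn0.
  rewrite (@eq_big_nat _ _ _ 1 N (fun l => ds N.+1 l - t) (fun l => ds N l - t)); first exact: IH.
  move=> l /andP [h1 _]; rewrite ds_S bN mul0n /=.
  rewrite leqn0 (negbTE (lt0n_neq0 h1)) addn0; congr (_ - _).
  by apply: eq_big_nat => r _; rewrite addn0.
Qed.
End Comb.
Section S2.
Local Open Scope ring_scope.
Lemma energy_lb (R : realFieldType) (s : seq nat) (a : R) (t0 k S : nat) :
  t0%:R <= a -> a < t0.+1%:R ->
  \sum_(x <- s) (x%:R : R) = (size s)%:R * a ->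
  (forall t, (S <= k * t + \sum_(x <- s) (x - t))%N) ->
  2 * (S%:R - k%:R * a) <= \sum_(x <- s) `|x%:R - a|.
Proof.
move=> ha1 ha2 hsum H.
set e := a - t0%:R.
have e0 : 0 <= e by rewrite /e subr_ge0.
have e1 : e <= 1 by rewrite /e; move: ha2; rewrite -natr1; lra.
have term x : 2 * ((1 - e) * ((x - t0)%N)%:R + e * ((x - t0.+1)%N)%:R) - (x%:R - a) <= `|x%:R - a|.
  case: (leqP x t0) => hx.
  - rewrite (eqP hx) (_ : (x - t0.+1)%N = 0%N); last by apply/eqP; rewrite subn_eq0; apply: leqW.
    rewrite !mulr0 addr0 mulr0 sub0r -normrN; exact: ler_norm.
  - rewrite !natrB ?(ltnW hx) //.
    have -> : 2 * ((1 - e) * (x%:R - t0%:R) + e * (x%:R - t0.+1%:R)) - (x%:R - a) = x%:R - a :> R.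
      by rewrite /e -natr1; ring.
    exact: ler_norm.
have sc : \sum_(i <- s) a = (size s)%:R * a.
  by elim: s {hsum H} => [|x s IH]; rewrite ?big_nil ?mul0r // big_cons IH /= -natr1; ring.
have hs := (@ler_sum _ _ s xpredT _ _ (fun x _ => term x)).
rewrite !sumrB -mulr_sumr big_split /= -!mulr_sumr hsum sc subrr subr0 in hs.
set N0 := \sum_(i <- s) ((i - t0)%N)%:R in hs.
set N1 := \sum_(i <- s) ((i - t0.+1)%N)%:R in hs.
have h0 : S%:R <= k%:R * t0%:R + N0 :> R.
  by rewrite /N0 -natrM -natr_sum -natrD ler_nat.
have h1 : S%:R <= k%:R * t0.+1%:R + N1 :> R.
  by rewrite /N1 -natrM -natr_sum -natrD ler_nat.
have p0 : (1 - e) * (S%:R - k%:R * t0%:R) <= (1 - e) * N0.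
  by apply: ler_wpM2l; [rewrite subr_ge0 | rewrite lerBlDr addrC].
have p1 : e * (S%:R - k%:R * t0.+1%:R) <= e * N1.
  by apply: ler_wpM2l; [ | rewrite lerBlDr addrC].
have ha : a = t0%:R + e by rewrite /e addrC subrK.
have hn : (t0.+1%:R : R) = t0%:R + 1 by rewrite -natr1.
rewrite hn in p1.
apply: le_trans hs.
rewrite ha in p0 p1 *.
nra.
Qed.
End S2.
Lemma card_setE (T : finType) (P : pred T) : #|[set x | P x]| = \sum_x (P x : nat).
Proof. by rewrite -sum1dep_card big_mkcond; apply: eq_bigr => x _; case: (P x). Qed.

Lemma handshake n (e : rel 'I_n) : simple_graph e -> \sum_v deg e v = (2 * nedges e)%N.
Proof.
move=> [hs hi]; rewrite /deg /nedges card_setE.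
under eq_bigr => v _ do rewrite card_setE.
rewrite -(pair_bigA _ (fun i j : 'I_n => ((i < j)%N && e i j : nat))).
have -> : \sum_(v : 'I_n) \sum_(u : 'I_n) (e v u : nat) =
   \sum_(v : 'I_n) \sum_(u : 'I_n) (((v < u)%N && e v u : nat) + ((u < v)%N && e u v : nat)).
  apply: eq_bigr => v _; apply: eq_bigr => u _.
  case: (ltngtP v u) => h.
  - by rewrite /= addn0.
  - by rewrite /= add0n hs.
  - have -> : v = u by apply: val_inj.
    by have := hi u; case: (e u u).
rewrite mul2n -addnn.
rewrite [X in _ = (_ + X)%N]exchange_big -big_split; apply: eq_bigr => v _.
by rewrite -big_split.
Qed.

Section S3.
Local Open Scope ring_scope.
Lemma spec_sum (R : realType) n (e : rel 'I_n) (lam : seq R) :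
  simple_graph e -> is_lap_spectrum e lam -> (0 < n)%N ->
  \sum_(x <- lam) x = (2 * nedges e)%:R.
Proof.
move=> hg [hsz _ hcp] n0.
have h1 := char_poly_trace (lap R e) n0.
rewrite hcp -{1}hsz coefPn_prod_XsubC ?hsz -?lt0n // in h1.
move/eqP: h1; rewrite eqr_opp => /eqP ->.
rewrite /mxtrace -handshake // natr_sum; apply: eq_bigr => i _.
by rewrite /lap mxE eqxx.
Qed.
End S3.
Section S4.
Local Open Scope ring_scope.
Lemma LE_G (R : realType) (lam : seq R) (n k : nat) (a : R) :
  size lam = n -> sorted (fun x y => y <= x) lam -> (1 <= k <= n)%N ->
  a < nth 0 lam k.-1 -> ((k < n)%N -> nth 0 lam k <= a) ->
  \sum_(x <- lam) x = n%:R * a ->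
  \sum_(x <- lam) `|x - a| = 2 * \sum_(0 <= i < k) (nth 0 lam i - a).
Proof.
move=> hsz hso /andP [hk1 hkn] ha1 ha2 hsum.
have tr : transitive (fun x y : R => y <= x) by move=> x y z h1 h2; apply: le_trans h2 h1.
have rf : reflexive (fun x y : R => y <= x) by move=> x; exact: lexx.
have mono i j : (i <= j)%N -> (j < n)%N -> nth 0 lam j <= nth 0 lam i.
  move=> hij hj; apply: (sorted_leq_nth tr rf 0 hso) => //; rewrite inE hsz //.
  exact: leq_ltn_trans hij hj.
rewrite (big_nth 0) hsz (@big_cat_nat _ _ _ k) //= /=.
have e1 : \sum_(0 <= i < k) `|nth 0 lam i - a| = \sum_(0 <= i < k) (nth 0 lam i - a).
  apply: eq_big_nat => i /andP [_ hi]; apply: ger0_norm; rewrite subr_ge0; apply: ltW.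
  apply: lt_le_trans ha1 _; apply: mono; first by rewrite -ltnS prednK.
  by rewrite prednK //; apply: leq_trans hkn; rewrite -ltnS prednK.
have e2 : \sum_(k <= i < n) `|nth 0 lam i - a| = - \sum_(k <= i < n) (nth 0 lam i - a).
  rewrite -sumrN; apply: eq_big_nat => i /andP [hi1 hi2]; rewrite ler0_norm // subr_le0.
  by apply: le_trans (mono k i hi1 hi2) (ha2 (leq_ltn_trans hi1 hi2)).
have e3 : \sum_(0 <= i < n) (nth 0 lam i - a) = 0.
  have hb : \sum_(0 <= i < n) nth 0 lam i = n%:R * a by rewrite -hsum [RHS](big_nth 0) hsz.
  rewrite sumrB hb.
  by rewrite sumr_const_nat subn0 mulr_natl subrr.
rewrite (@big_cat_nat _ _ _ k) //= /= in e3.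
rewrite e1 e2.
have -> : \sum_(k <= i < n) (nth 0 lam i - a) = - \sum_(0 <= i < k) (nth 0 lam i - a).
  by apply/eqP; rewrite -addr_eq0 addrC e3.
by rewrite opprK mulr2n mulrDl mul1r.
Qed.
End S4.
Section Eig.
Variable b : nat -> bool.
Definition Aj (r s : nat) : bool := (r != s) && b (maxn r s).
Definition cntA r lo hi := \sum_(lo <= s < hi) (Aj r s : nat).

Lemma cnt_lo r lo hi : (hi <= r)%N -> cntA r lo hi = ((hi - lo) * b r)%N.
Proof.
move=> h; rewrite /cntA -sum_nat_const_nat; apply: eq_big_nat => s /andP [_ hs].
have hsr : (s < r)%N by apply: leq_trans hs h.
by rewrite /Aj (gtn_eqF hsr) /= (maxn_idPl (ltnW hsr)).
Qed.

Lemma cnt_hi r lo hi : (r < lo)%N -> cntA r lo hi = \sum_(lo <= s < hi) (b s : nat).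
Proof.
move=> h; rewrite /cntA; apply: eq_big_nat => s /andP [hs _].
have hsr : (r < s)%N by apply: leq_trans h hs.
by rewrite /Aj (ltn_eqF hsr) /= (maxn_idPr (ltnW hsr)).
Qed.

Lemma cnt_split r lo mid hi : (lo <= mid)%N -> (mid <= hi)%N ->
  cntA r lo hi = (cntA r lo mid + cntA r mid hi)%N.
Proof. by move=> h1 h2; rewrite /cntA (@big_cat_nat _ _ _ mid). Qed.

Lemma dg_cnt n r : (r < n)%N -> cntA r 0 n = dg b n r.
Proof.
move=> h; rewrite (@cnt_split r 0 r) // ?(ltnW h) // (@cnt_split r r r.+1) //.
rewrite (@cnt_lo r 0 r) // (@cnt_hi r r.+1 n) // subn0 /cntA big_nat1 /Aj eqxx /= add0n.
by rewrite /dg /Bc mulnC.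
Qed.

Lemma Aj_lt r s : (r < s)%N -> Aj r s = b s.
Proof. by move=> h; rewrite /Aj (ltn_eqF h) (maxn_idPr (ltnW h)). Qed.
Lemma Aj_gt r s : (s < r)%N -> Aj r s = b r.
Proof. by move=> h; rewrite /Aj (gtn_eqF h) (maxn_idPl (ltnW h)). Qed.

Local Open Scope ring_scope.
Variable R : realType.
Definition qv (c r : nat) : R := if c == 0%N then 1 else c%:R * (r == c)%:R - (r < c)%:R.
Definition Lf n (r s : nat) : R := (r == s)%:R * (dg b n r)%:R - (Aj r s)%:R.

Lemma sum_eq1 n r (G : nat -> R) : (r < n)%N -> \sum_(0 <= s < n) (r == s)%:R * G s = G r.
Proof.
move=> h; rewrite (@big_cat_nat _ _ _ r) //= ?(ltnW h) // (@big_ltn _ _ _ r n) //= eqxx mul1r.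
rewrite big1_seq ?add0r; last first.
  move=> i /andP [_]; rewrite mem_index_iota => /andP [_ hi]; by rewrite (gtn_eqF hi) /= mul0r.
rewrite big1_seq ?addr0 //.
move=> i /andP [_]; rewrite mem_index_iota => /andP [hi _]; by rewrite (ltn_eqF hi) /= mul0r.
Qed.

Lemma sum_lt n c (G : nat -> R) : (c <= n)%N ->
  \sum_(0 <= s < n) (s < c)%:R * G s = \sum_(0 <= s < c) G s.
Proof.
move=> h; rewrite (@big_cat_nat _ _ _ c) //=.
rewrite [X in _ + X]big1_seq ?addr0; last first.
  by move=> i /andP [_]; rewrite mem_index_iota => /andP [hi _]; rewrite ltnNge hi /= mul0r.
by apply: eq_big_nat => s /andP [_ hs]; rewrite hs /= mul1r.
Qed.

Lemma eigen_key n r c : (r < n)%N -> (c < n)%N ->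
  \sum_(0 <= s < n) Lf n r s * qv c s = (mu b n c)%:R * qv c r.
Proof.
move=> hr hc.
have e0 : \sum_(0 <= s < n) Lf n r s * qv c s =
   (dg b n r)%:R * qv c r - \sum_(0 <= s < n) (Aj r s)%:R * qv c s.
  rewrite /Lf -(sum_eq1 (fun s => (dg b n r)%:R * qv c s) hr) -sumrB.
  by apply: eq_big_nat => s _; rewrite mulrBl mulrA.
rewrite e0 /qv; case: eqP => [c0 | /eqP c0].
  rewrite /mu c0 eqxx mul0r mulr1.
  under eq_big_nat => s _ do rewrite mulr1.
  by rewrite -natr_sum -/(cntA r 0 n) dg_cnt // subrr.
have e1 : \sum_(0 <= s < n) (Aj r s)%:R * (c%:R * (s == c)%:R - (s < c)%:R) =
    c%:R * (Aj r c)%:R - (cntA r 0 c)%:R :> R.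
  rewrite /cntA natr_sum -(sum_lt (fun s => (Aj r s)%:R) (ltnW hc)).
  rewrite -[X in X - _](sum_eq1 (fun s => c%:R * (Aj r s)%:R) hc) -sumrB.
  apply: eq_big_nat => s _; rewrite mulrBr; congr (_ - _); last by rewrite mulrC.
  case: eqP => [-> | /eqP h]; first by rewrite eqxx /= !mulr1 mul1r mulrC.
  by rewrite eq_sym (negbTE h) /= !mulr0 mul0r.
rewrite e1 /mu (negbTE c0).
have hdg := dg_cnt hr.
have hdc : dg b n c = (b c * c + Bc b n c)%N by [].
case: (ltngtP r c) => hrc.
- rewrite /= Aj_lt // -hdg (@cnt_split r 0 c n) // ?(ltnW hc) // (@cnt_hi r c n) //.
  rewrite big_ltn // -/(Bc b n c) !natrD !natrM; ring.
- rewrite /= Aj_gt //.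
  rewrite (@cnt_lo r 0 c) ?(ltnW hrc) // subn0 natrM; ring.
- subst r; rewrite /= /Aj eqxx /=.
  rewrite (@cnt_lo c 0 c) // subn0 /dg !natrD !natrM; ring.
Qed.
End Eig.
Section Orth.
Local Open Scope ring_scope.
Variable R : realType.
Notation qv := (qv R).

Lemma split3 n c (F : nat -> R) : (c < n)%N ->
  \sum_(0 <= r < n) F r = \sum_(0 <= r < c) F r + F c + \sum_(c.+1 <= r < n) F r.
Proof.
by move=> h; rewrite (@big_cat_nat _ _ _ c) //= ?(ltnW h) // (@big_ltn _ _ _ c n) // addrA.
Qed.

Lemma qv_gt c r : c != 0%N -> (c < r)%N -> qv c r = 0.
Proof. by move=> c0 h; rewrite /qv (negbTE c0) (gtn_eqF h) ltnNge (ltnW h) /= mulr0 subr0. Qed.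

Lemma qv_lt c r : c != 0%N -> (r < c)%N -> qv c r = -1.
Proof. by move=> c0 h; rewrite /qv (negbTE c0) (ltn_eqF h) h /= mulr0 sub0r. Qed.

Lemma qv_eq c : c != 0%N -> qv c c = c%:R.
Proof. by move=> c0; rewrite /qv (negbTE c0) eqxx ltnn /= mulr1 subr0. Qed.

Lemma sum_zero m n (F : nat -> R) : (forall r, (m <= r < n)%N -> F r = 0) ->
  \sum_(m <= r < n) F r = 0.
Proof. by move=> h; rewrite (eq_big_nat _ _ h) big1. Qed.

Lemma sum_const m n (x : R) : \sum_(m <= r < n) x = x *+ (n - m).
Proof. by rewrite sumr_const_nat. Qed.

Lemma qv_sum n c : (c < n)%N -> \sum_(0 <= r < n) qv c r = if c == 0%N then n%:R else 0.
Proof.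
move=> hc; case: eqP => [-> | /eqP c0].
  by rewrite /qv /= sum_const subn0.
have z : \sum_(c.+1 <= r < n) qv c r = 0.
  by apply: sum_zero => r /andP [h _]; rewrite qv_gt.
rewrite (split3 _ hc) qv_eq // z.
rewrite (eq_big_nat _ _ (F2 := fun _ => -1)); last by move=> r /andP [_ h]; rewrite qv_lt.
by rewrite sum_const subn0 addr0 mulNrn addrC subrr.
Qed.

Lemma orth_lt n c c' : (c < c')%N -> (c' < n)%N ->
  \sum_(0 <= r < n) qv c r * qv c' r = 0.
Proof.
move=> h1 h2.
have c'0 : c' != 0%N by rewrite -lt0n; apply: leq_ltn_trans h1.
have hcn : (c < n)%N by apply: ltn_trans h2.
case: (eqVneq c 0%N) => [c0 | c0].
  subst c; rewrite (eq_big_nat _ _ (F2 := fun r => qv c' r)); first by rewrite qv_sum // (negbTE c'0).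
  by move=> r _; rewrite /qv /= mul1r.
rewrite (@big_cat_nat _ _ _ c.+1) //= [X in _ + X]sum_zero ?addr0; last first.
  by move=> r /andP [h _]; rewrite qv_gt // mul0r.
rewrite (eq_big_nat _ _ (F2 := fun r => - qv c r)); last first.
  by move=> r /andP [_ h]; rewrite (@qv_lt c' r c'0 (leq_trans h h1)) mulrN1.
rewrite sumrN; apply/eqP; rewrite oppr_eq0; apply/eqP.
have z : \sum_(c.+1 <= r < n) qv c r = 0 by apply: sum_zero => r /andP [h _]; rewrite qv_gt.
by have := qv_sum hcn; rewrite (negbTE c0) (@big_cat_nat _ _ _ c.+1) //= z addr0.
Qed.

Lemma orth_eq n c : (c < n)%N ->
  \sum_(0 <= r < n) qv c r * qv c r = if c == 0%N then n%:R else c%:R + c%:R ^+ 2.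
Proof.
move=> hc; case: eqP => [-> | /eqP c0].
  by rewrite /qv /= (eq_big_nat _ _ (F2 := fun _ => 1)) ?sum_const ?subn0 // => r _; rewrite mulr1.
have z : \sum_(c.+1 <= r < n) qv c r * qv c r = 0.
  by apply: sum_zero => r /andP [h _]; rewrite qv_gt ?mul0r.
rewrite (split3 _ hc) qv_eq // z.
rewrite (eq_big_nat _ _ (F2 := fun _ => 1)); last by move=> r /andP [_ h]; rewrite qv_lt // mulrNN mulr1.
by rewrite sum_const subn0 addr0 expr2.
Qed.
End Orth.
Section Thr.
Local Open Scope ring_scope.
Variable R : realType.
Variable n : nat.
Variable T : rel 'I_n.
Variable p : 'S_n.
Variable b0 : 'I_n -> bool.
Hypothesis hT : forall u v : 'I_n, (p u < p v)%N -> T u v = b0 v.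
Hypothesis hsg : simple_graph T.

Lemma pI : injective p. Proof. exact: perm_inj. Qed.
Definition bt (i : nat) : bool := [exists u : 'I_n, (p u == i :> nat) && b0 u].

Lemma pinj u w : (p u == p w :> nat) = (u == w).
Proof. by rewrite (inj_eq val_inj) (inj_eq pI). Qed.

Lemma bt_p u : bt (p u) = b0 u.
Proof.
rewrite /bt; case: existsP => [[v /andP [h hb]] | hn].
  by move: h; rewrite pinj => /eqP <-; rewrite hb.
by case hb: (b0 u) => //; exfalso; apply: hn; exists u; rewrite eqxx hb.
Qed.

Lemma T_A u w : T u w = Aj bt (p u) (p w).
Proof.
case: (ltngtP (p u) (p w)) => h.
- by rewrite hT // Aj_lt // bt_p.
- by rewrite (proj1 hsg) hT // Aj_gt // bt_p.
- have : (p u == p w :> nat) by rewrite h.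
  rewrite pinj => /eqP ->; rewrite /Aj eqxx /=.
  by apply/negbTE; exact: (proj2 hsg).
Qed.

Lemma reidx (F : 'I_n -> R) : \sum_w F (p w) = \sum_s F s.
Proof. by rewrite [RHS](reindex_inj pI). Qed.
Lemma reidxN (F : 'I_n -> nat) : (\sum_w F (p w) = \sum_s F s)%N.
Proof. by rewrite [RHS](reindex_inj pI). Qed.

Lemma deg_T u : deg T u = dg bt n (p u).
Proof.
rewrite /deg card_setE (eq_bigr (fun w => Aj bt (p u) (p w) : nat)); last by move=> w _; rewrite T_A.
rewrite (reidxN (fun s => Aj bt (p u) s : nat)) -(big_mkord xpredT (fun s => Aj bt (p u) s : nat)).
by rewrite -/(cntA bt (p u) 0 n) dg_cnt.
Qed.

Lemma conj_T i : conj_deg T i = ds bt n i.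
Proof.
rewrite /conj_deg card_setE (eq_bigr (fun w => (i <= dg bt n (p w))%N : nat)); last by move=> w _; rewrite deg_T.
by rewrite (reidxN (fun s => (i <= dg bt n s)%N : nat)) -(big_mkord xpredT (fun s => (i <= dg bt n s)%N : nat)).
Qed.

Definition Pm : 'M[R]_n := \matrix_(u, c) qv R c (p u).
Definition Dm : 'M[R]_n := diag_mx (\row_(c < n) ((mu bt n c)%:R : R)).

Lemma LP : lap R T *m Pm = Pm *m Dm.
Proof.
apply/matrixP => u c; rewrite mul_mx_diag !mxE.
rewrite (eq_bigr (fun w => Lf bt R n (p u) (p w) * qv R c (p w))); last first.
  move=> w _; rewrite !mxE /Lf pinj; case: eqP => [-> | _].
    by rewrite /Aj eqxx /= deg_T mul1r subr0.
  by rewrite T_A mul0r sub0r; case: (Aj _ _ _) => /=; rewrite ?oppr0.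
rewrite (reidx (fun s => Lf bt R n (p u) s * qv R c s)).
rewrite -(big_mkord xpredT (fun s => Lf bt R n (p u) s * qv R c s)).
by rewrite eigen_key // mulrC.
Qed.

Lemma PtP : Pm^T *m Pm = diag_mx (\row_(c < n) (if c == 0%N :> nat then n%:R else (c%:R + c%:R ^+ 2) : R)).
Proof.
apply/matrixP => c c'; rewrite !mxE.
rewrite (eq_bigr (fun u => qv R c (p u) * qv R c' (p u))); last by move=> u _; rewrite !mxE.
rewrite (reidx (fun s => qv R c s * qv R c' s)).
rewrite -(big_mkord xpredT (fun s => qv R c s * qv R c' s)).
case: (ltngtP c c') => h.
- have ce : (c == c') = false by rewrite -val_eqE (ltn_eqF h).
  by rewrite orth_lt // ce mulr0n.
- rewrite (eq_big_nat _ _ (F2 := fun s => qv R c' s * qv R c s)); last by move=> s _; rewrite mulrC.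
  have ce : (c == c') = false by rewrite -val_eqE (gtn_eqF h).
  by rewrite orth_lt // ce mulr0n.
- have -> : c' = c by apply: val_inj.
  by rewrite orth_eq // eqxx mulr1n.
Qed.

Lemma detP : \det Pm != 0.
Proof.
have := congr1 determinant PtP; rewrite det_mulmx det_tr det_diag => e.
have : \prod_(i < n) (\row_(c < n) (if c == 0%N :> nat then n%:R else (c%:R + c%:R ^+ 2) : R)) 0 i != 0.
  apply/prodf_neq0 => i _; rewrite mxE; case: ifP => hi.
    by rewrite pnatr_eq0 -lt0n; apply: leq_ltn_trans (ltn_ord i); exact: leq0n.
  by rewrite -natrX -natrD pnatr_eq0 addn_eq0 hi.
by rewrite -e mulf_eq0 orbb.
Qed.
Lemma charT : char_poly (lap R T) = \prod_(c < n) ('X - ((mu bt n c)%:R)%:P).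
Proof.
have hD : char_poly Dm = \prod_(c < n) ('X - ((mu bt n c)%:R)%:P).
  by rewrite char_poly_trig ?diag_mx_is_trig //; apply: eq_bigr => i _; rewrite !mxE eqxx mulr1n.
rewrite -hD.
set Mp := map_mx (@polyC R) Pm.
have key : char_poly_mx (lap R T) *m Mp = Mp *m char_poly_mx Dm.
  by rewrite /char_poly_mx mulmxBl mulmxBr -map_mxM LP map_mxM scalar_mxC.
have := congr1 determinant key; rewrite !det_mulmx /Mp det_map_mx => h.
apply: (@mulIf _ (\det Pm)%:P); first by rewrite polyC_eq0 detP.
by rewrite h mulrC.
Qed.
End Thr.
Unset Implicit Arguments.
Local Open Scope ring_scope.
Theorem lemma1 (R : realType) (n : nat) (G : rel 'I_n) (lamG : seq R) (k : nat) :
  simple_graph G -> is_lap_spectrum G lamG ->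
  (1 <= k <= n)%N ->
  avg_deg R G < nth 0 lamG k.-1 ->
  ((k < n)%N -> nth 0 lamG k <= avg_deg R G) ->
  forall (T : rel 'I_n) (lamT : seq R),
    simple_graph T -> threshold T -> nedges T = nedges G ->
    is_lap_spectrum T lamT ->
    \sum_(i < k) nth 0 lamG i <= (\sum_(1 <= i < k.+1) conj_deg T i)%:R ->
    lap_energy G lamG <= lap_energy T lamT.
Proof.
move=> hG hspG hk ha1 ha2 T lamT hTg [p [b0 hTh]] hm hspT hS.
have n0 : (0 < n)%N by case/andP: hk => h1 h2; apply: leq_trans h2.
have nR : (0 : R) < n%:R by rewrite ltr0n.
set m := nedges G.
set a := avg_deg R G.
have aT : avg_deg R T = a by rewrite /a /avg_deg hm.
have na : n%:R * a = (2 * m)%:R.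
  by rewrite /a /avg_deg mulrC divfK // pnatr_eq0 -lt0n.
have sumG : \sum_(x <- lamG) x = n%:R * a by rewrite na (spec_sum hG hspG n0).
have sumT : \sum_(x <- lamT) x = n%:R * a by rewrite na (spec_sum hTg hspT n0) hm.
case: (hspG) => szG soG _.
have LEG := LE_G szG soG hk ha1 ha2 sumG.
set s := [seq mu (bt p b0) n c | c <- iota 0 n].
have hperm : perm_eq lamT [seq (x%:R : R) | x <- s].
  apply: prod_XsubC_eq; case: hspT => _ _ <-.
  rewrite (charT R hTh hTg) -map_comp big_map -(big_mkord xpredT (fun c => 'X - ((mu (bt p b0) n c)%:R)%:P)).
  by rewrite /index_iota subn0.
have LET : lap_energy T lamT = \sum_(x <- s) `|x%:R - a|.
  by rewrite /lap_energy aT (perm_big _ hperm) big_map.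
have sums : \sum_(x <- s) (x%:R : R) = (size s)%:R * a.
  by rewrite size_map size_iota -sumT (perm_big _ hperm) !big_map.
set S := (\sum_(1 <= i < k.+1) conj_deg T i)%N.
have SE : S = (\sum_(1 <= l < k.+1) ds (bt p b0) n l)%N.
  by apply: eq_big_nat => l _; rewrite (conj_T hTh hTg).
have H : forall t, (S <= k * t + \sum_(x <- s) (x - t))%N.
  move=> t; rewrite big_map.
  have e : (\sum_(j <- iota 0 n) (mu (bt p b0) n j - t) = \sum_(0 <= j < n) (mu (bt p b0) n j - t))%N.
    by rewrite /index_iota subn0.
  rewrite e big_ltn // {1}/mu eqxx sub0n add0n.
  have h1 := comb_main (bt p b0) n t.
  have h2 : (\sum_(1 <= l < k.+1) (ds (bt p b0) n l - t) <= \sum_(1 <= l < n) (ds (bt p b0) n l - t))%N.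
    have -> : (\sum_(1 <= l < n) (ds (bt p b0) n l - t) = \sum_(1 <= l < n.+1) (ds (bt p b0) n l - t))%N.
      by rewrite big_nat_recr //= ds_n sub0n addn0.
    case/andP: hk => hk1 hk2.
    by rewrite [X in (_ <= X)%N](@big_cat_nat _ _ _ k.+1) //= leq_addr.
  have h3 : (S <= k * t + \sum_(1 <= l < k.+1) (ds (bt p b0) n l - t))%N.
    rewrite SE; have : (\sum_(1 <= l < k.+1) ds (bt p b0) n l <= \sum_(1 <= l < k.+1) ((ds (bt p b0) n l - t) + t))%N.
      by apply: leq_sum => l _; rewrite addnC -leq_subLR.
    by rewrite big_split /= sum_nat_const_nat subSS subn0 addnC mulnC.
  apply: leq_trans h3 _; rewrite leq_add2l; exact: leq_trans h2 h1.
set t0 := ((2 * m) %/ n)%N.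
have ht1 : t0%:R <= a.
  rewrite /a /avg_deg ler_pdivlMr // -natrM ler_nat; exact: leq_trunc_div.
have ht2 : a < t0.+1%:R.
  rewrite /a /avg_deg ltr_pdivrMr // -natrM ltr_nat; exact: ltn_ceil.
have LB := energy_lb ht1 ht2 sums H.
rewrite LET /lap_energy LEG -/a; apply: le_trans LB.
rewrite sumrB sumr_const_nat subn0 mulr_natl big_mkord.
rewrite -[a *+ k]mulr_natl -[_ *+ 2]mulr_natl; lra.
Qed.
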